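(* Let $n\ge q\ge1$ and let $\mathcal{S}$ be a set of two-factor interactions $F_iF_j$ among $n$ factors $F_1,\dots,F_n$. Suppose at least one of the following holds: (i) every factor appears in at most $2^q-1$ interactions of $\mathcal{S}$, and there is no set of $2^q$ factors such that $\mathcal{S}$ contains all $\binom{2^q}{2}$ pairwise interactions among them; (ii) there are at most $2^q-1$ factors each of which appears in at least $2^q-1$ interactions of $\mathcal{S}$. Then there exists a blocked $2^n$ factorial in blocks of size $2^q$ from which all main effects and all interactions in $\mathcal{S}$ are estimable.
   Context: A blocked $2^n$ factorial in blocks of size $2^q$ is specified by a $q\times n$ generator matrix $X$ over $\mathrm{GF}(2)$ of rank $q$: the principal block is the row space of $X$ and the other blocks are its cosets in $\mathrm{GF}(2)^n$. An effect of a set $S$ of factors, with contrast $(-1)^{\sum_{j\in S}x_j}$, is estimable iff its contrast sums to zero over every block. *)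

(* Defs.v *)
From HB Require Import structures.
From mathcomp Require Import all_boot all_order all_algebra.
Set Implicit Arguments. Unset Strict Implicit. Unset Printing Implicit Defensive.
Import GRing.Theory.
Local Open Scope ring_scope.

(* Treatment combinations are row vectors x in GF(2)^n.  A blocking scheme
   is given by a generator matrix X : 'M['F_2]_(q, n) of rank q; the
   principal block is the row space of X and the blocks are its cosets
   a + rowspace(X), i.e. the x with (x - a) in the row space of X. *)
Definition in_block (q n : nat) (X : 'M['F_2]_(q, n)) (a x : 'rV['F_2]_n) : bool :=
  ((x - a) <= X)%MS.

Definition contrast (n : nat) (T : {set 'I_n}) (x : 'rV['F_2]_n) : int :=
  (-1) ^+ (nat_of_ord (\sum_(j in T) x 0 j)).

Definition estimable (q n : nat) (X : 'M['F_2]_(q, n)) (T : {set 'I_n}) : Prop :=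
  forall a : 'rV['F_2]_n,
    \sum_(x : 'rV['F_2]_n | in_block X a x) contrast T x = 0.

(* A two-factor interaction F_iF_j (i <> j) is represented by the 2-set {i, j}. *)
Definition two_factor_interactions (n : nat) (S : {set {set 'I_n}}) : Prop :=
  forall s, s \in S -> #|s| = 2%N.

Definition fdeg (n : nat) (S : {set {set 'I_n}}) (i : 'I_n) : nat :=
  #|[set s in S | i \in s]|.

(* Main.v *)
Require Import Defs.
From HB Require Import structures.
From mathcomp Require Import all_boot all_order all_algebra.
From mathcomp Require Import zify.
From Stdlib Require Classical_Prop.

Section Col.
Variable V : finType.
Variable e : rel V.
Hypothesis esym : symmetric e.
Hypothesis eirr : irreflexive e.
Variable k : nat.

Definition proper (U : {set V}) (c : V -> 'I_k) :=
  forall x y, x \in U -> y \in U -> e x y -> c x != c y.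

Definition recol (c : V -> 'I_k) (u : V) (m : 'I_k) :=
  fun z => if z == u then m else c z.

Lemma proper_sub (A B : {set V}) (c : V -> 'I_k) : A \subset B -> proper B c -> proper A c.
Proof. by move=> /subsetP sAB hB x y hx hy; apply: hB; apply: sAB. Qed.

Lemma extend (U : {set V}) x (c : V -> 'I_k) col : x \in U -> proper (U :\ x) c ->
  (forall y, y \in U :\ x -> e x y -> c y != col) ->
  proper U (recol c x col).
Proof.
move=> hx hc hcol y z hy hz hyz; rewrite /recol.
case: (y =P x) => [eyx|nyx]; case: (z =P x) => [ezx|nzx].
- by subst; rewrite eirr in hyz.
- have hz' : z \in U :\ x by rewrite !inE; apply/andP; split=> //; apply/eqP.
  by rewrite eq_sym; apply: hcol => //; subst.
- have hy' : y \in U :\ x by rewrite !inE; apply/andP; split=> //; apply/eqP.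
  by apply: hcol => //; subst; rewrite esym.
- apply: hc => //; rewrite !inE; apply/andP; split=> //; apply/eqP => //.
Qed.

Lemma missing (B : {set V}) (c : V -> 'I_k) :
  #|[set c y | y in B]| < k -> exists col, forall y, y \in B -> c y != col.
Proof.
move=> h.
have : ~~ ([set: 'I_k] \subset [set c y | y in B]).
  apply/negP => /subset_leq_card; rewrite cardsT card_ord => h1.
  by move: (leq_ltn_trans h1 h); rewrite ltnn.
case/subsetPn => col _ hcol; exists col => y hy.
by apply: contra hcol => /eqP <-; apply: imset_f.
Qed.

Lemma nbr_card_imset (B : {set V}) (c : V -> 'I_k) :
  #|[set c y | y in B]| <= #|B|.
Proof. exact: leq_imset_card. Qed.

Lemma degen (hk : 0 < k) :
  (forall W : {set V}, W != set0 -> exists2 x, x \in W & #|[set y in W | e x y]| < k) ->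
  forall U : {set V}, exists c, proper U c.
Proof.
move=> hW U.
move: {2}#|U| (leqnn #|U|) => N; elim: N U => [|N IH] U hU.
  exists (fun _ => Ordinal hk) => x y hx; move: hU.
  by rewrite leqn0 cards_eq0 => /eqP hU; rewrite hU inE in hx.
case: (set_0Vmem U) => [->|[x0 hx0]].
  by exists (fun _ => Ordinal hk) => x y; rewrite inE.
have [x hx hdx] := hW U (introT (set0Pn U) (ex_intro _ x0 hx0)).
have [c hc] : exists c, proper (U :\ x) c.
  by apply: IH; move: hU; rewrite (cardsD1 x U) hx /= add1n ltnS.
pose B := [set y in U :\ x | e x y].
have [col hcol] : exists col, forall y, y \in B -> c y != col.
  apply: missing; apply: leq_ltn_trans (nbr_card_imset B c) _.
  apply: leq_ltn_trans hdx; apply: subset_leq_card; apply/subsetP => y.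
  by rewrite !inE => /andP [/andP [_ ->] ->].
exists (recol c x col); apply: extend => // y hy hxy.
by apply: hcol; rewrite inE hy hxy.
Qed.

Lemma few_high (hk : 0 < k) :
  #|[set x | k <= #|[set y | e x y]|]| <= k -> forall U : {set V}, exists c, proper U c.
Proof.
move=> hH; apply: degen => // W /set0Pn [x0 hx0].
case: (boolP [exists x in W, #|[set y | e x y]| < k]).
  case/exists_inP => x hx hlt; exists x => //.
  apply: leq_ltn_trans hlt; apply: subset_leq_card; apply/subsetP => y.
  by rewrite !inE => /andP [].
move/exists_inPn => hall; exists x0 => //.
have sW : W \subset [set x | k <= #|[set y | e x y]|].
  by apply/subsetP => x hx; rewrite inE leqNgt hall.
have cW := leq_trans (subset_leq_card sW) hH.
have : [set y in W | e x0 y] \subset W :\ x0.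
  apply/subsetP => y; rewrite !inE => /andP [-> h]; rewrite andbT.
  by apply: contraTneq h => ->; rewrite eirr.
move/subset_leq_card; rewrite (cardsD1 x0 W) hx0 /= add1n in cW.
move=> h; apply: leq_ltn_trans h _; exact: cW.
Qed.

End Col.
Arguments proper {V} e {k} U c.
Arguments recol {V k} c u m.
Arguments extend {V e} esym eirr {k} U x c col.

Section PathLemmas.
Variable V : finType.

Lemma sub_card_eq {A B : {set V}} : A \subset B -> #|B| <= #|A| -> B \subset A.
Proof.
move=> sAB hc; have := subset_leqif_cards sAB.
move=> [_ /esym]; rewrite eqn_leq hc andbT (subset_leq_card sAB) => /eqP ->.
exact: subxx.
Qed.

Lemma conn_closed (R : rel V) (Q : pred V) x y :
  (forall a b, Q a -> R a b -> Q b) -> Q x -> connect R x y -> Q y.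
Proof.
move=> hQ hx /connectP [p hp ->]; elim: p x hx hp => [|z p IH] x hx //=.
by move=> /andP [hxz hp]; apply: IH hp; apply: hQ hxz.
Qed.

Lemma path_adj (R : rel V) x p r : path R x p -> r < size p ->
  R (nth x (x :: p) r) (nth x (x :: p) r.+1).
Proof. by move=> /(pathP x) h hr; apply: h. Qed.

Lemma path_nbr (R : rel V) (Rsym : symmetric R) x p r z :
  path R x p -> uniq (x :: p) -> r <= size p ->
  #|[set y | R (nth x (x :: p) r) y]| <= (0 < r) + (r < size p) ->
  R (nth x (x :: p) r) z ->
  (r < size p /\ z = nth x (x :: p) r.+1) \/ (0 < r /\ z = nth x (x :: p) r.-1).
Proof.
move=> hp hu hr hcard hz.
set s := x :: p.
have hsz : size s = (size p).+1 by [].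
have adjN : r < size p -> R (nth x s r) (nth x s r.+1) by move=> h; apply: path_adj.
have adjP : 0 < r -> R (nth x s r) (nth x s r.-1).
  move=> h; rewrite Rsym; have := @path_adj R x p r.-1 hp.
  by rewrite prednK //; apply; lia.
have hzP : z \in [set y | R (nth x s r) y] by rewrite inE.
case h0: (0 < r); case h1: (r < size p); rewrite h0 h1 /= in hcard.
- have hne : nth x s r.+1 != nth x s r.-1.
    by rewrite nth_uniq // ?hsz; lia.
  have sub : [set nth x s r.+1; nth x s r.-1] \subset [set y | R (nth x s r) y].
    apply/subsetP => y; rewrite !inE => /orP [] /eqP ->; [exact: adjN | exact: adjP].
  have := subsetP (sub_card_eq sub _) z hzP.
  rewrite cards2 hne => /(_ hcard); rewrite !inE => /orP [] /eqP ->; auto.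
- have sub : [set nth x s r.-1] \subset [set y | R (nth x s r) y].
    by apply/subsetP => y; rewrite !inE => /eqP ->; exact: adjP.
  have := subsetP (sub_card_eq sub _) z hzP.
  by rewrite cards1 => /(_ hcard); rewrite !inE => /eqP ->; auto.
- have sub : [set nth x s r.+1] \subset [set y | R (nth x s r) y].
    by apply/subsetP => y; rewrite !inE => /eqP ->; exact: adjN.
  have := subsetP (sub_card_eq sub _) z hzP.
  by rewrite cards1 => /(_ hcard); rewrite !inE => /eqP ->; auto.
- by move: hcard; rewrite leqn0 cards_eq0 => /eqP h; rewrite h inE in hzP.
Qed.

End PathLemmas.
Arguments sub_card_eq {V A B}.
Arguments conn_closed {V R Q x y}.
Arguments path_adj {V R x p r}.
Arguments path_nbr {V R} Rsym {x p r z}.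

Lemma upath (V : finType) (R : rel V) x y : connect R x y ->
  exists p, [/\ path R x p, last x p = y & uniq (x :: p)].
Proof.
move=> /connectP [p0 hp0 ->]; case: (shortenP hp0) => p hp hu _.
by exists p.
Qed.

Lemma card2_ge (V : finType) (A : {set V}) a b : a \in A -> b \in A -> a != b -> 1 < #|A|.
Proof. by move=> ha hb hab; apply/card_gt1P; exists a, b. Qed.

Lemma path_two (V : finType) (R : rel V) (Rsym : symmetric R) x p r :
  path R x p -> uniq (x :: p) -> 0 < r -> r < size p ->
  [/\ R (nth x (x :: p) r) (nth x (x :: p) r.+1),
      R (nth x (x :: p) r) (nth x (x :: p) r.-1) &
      nth x (x :: p) r.+1 != nth x (x :: p) r.-1].
Proof.
move=> hp hu hr0 hr; split.
- exact: path_adj.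
- rewrite Rsym; have := @path_adj _ _ _ _ r.-1 hp; rewrite prednK //; apply.
  exact: ltnW.
- have h1 : r.+1 < size (x :: p) by rewrite /= ltnS.
  have h2 : r.-1 < size (x :: p) by rewrite /= ltnS (leq_trans (leq_pred r) (ltnW hr)).
  by rewrite (nth_uniq x h1 h2 hu) (gtn_eqF (leq_ltn_trans (leq_pred r) (ltnSn r))).
Qed.
Arguments path_two {V R} Rsym {x p r}.
Arguments upath {V R x y}.
Arguments card2_ge {V A a b}.

Section Brooks.
Variable V : finType.
Variable e : rel V.
Hypothesis esym : symmetric e.
Hypothesis eirr : irreflexive e.
Variable k : nat.
Hypothesis hdeg : forall x, #|[set y | e x y]| <= k.
Hypothesis hk3 : 3 <= k.
Hypothesis hcliq : ~ exists T : {set V}, #|T| = k.+1 /\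
  (forall x y, x \in T -> y \in T -> x != y -> e x y).

Section Stuck.
Variable U : {set V}.
Variable v : V.
Hypothesis hv : v \in U.
Hypothesis hnone : forall c : V -> 'I_k, ~ proper e U c.

Definition U' := U :\ v.
Definition Nb := [set y in U' | e v y].
Definition cnt (c : V -> 'I_k) u col := #|[set z in U' | e u z & c z == col]|.

Lemma inU' x : x \in U' = (x != v) && (x \in U).
Proof. by rewrite /U' !inE. Qed.

Lemma rainbow {c : V -> 'I_k} : proper e U' c -> forall col, exists2 y, y \in Nb & c y = col.
Proof.
move=> hc col; case: (boolP [exists y in Nb, c y == col]).
  by case/exists_inP => y hy /eqP; exists y.
move/exists_inPn => hn; exfalso.
apply: (hnone (recol c v col)); apply: extend => // y hy hvy.
by have := hn y; rewrite /Nb inE hy hvy /= => /(_ isT).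
Qed.

Lemma rain_inj {c : V -> 'I_k} : proper e U' c -> {in Nb &, injective c}.
Proof.
move=> hc; apply/imset_injP; rewrite eqn_leq leq_imset_card /=.
have -> : [set c x | x in Nb] = [set: 'I_k].
  apply/eqP; rewrite eqEsubset subsetT /=; apply/subsetP => col _.
  by have [y hy <-] := rainbow hc col; apply: imset_f.
rewrite cardsT card_ord; apply: leq_trans (hdeg v); apply: subset_leq_card.
by apply/subsetP => y; rewrite !inE => /andP [].
Qed.

Lemma cardN {c : V -> 'I_k} : proper e U' c -> #|Nb| = k.
Proof.
move=> hc; move/imset_injP: (rain_inj hc) => /eqP <-.
have -> : [set c x | x in Nb] = [set: 'I_k].
  apply/eqP; rewrite eqEsubset subsetT /=; apply/subsetP => col _.
  by have [y hy <-] := rainbow hc col; apply: imset_f.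
by rewrite cardsT card_ord.
Qed.

Lemma sum_cnt (c : V -> 'I_k) u : \sum_(col < k) cnt c u col = #|[set z in U' | e u z]|.
Proof.
rewrite -sum1_card (partition_big c xpredT) //=.
apply: eq_bigr => col _; rewrite /cnt -sum1_card; apply: eq_bigl => z.
by rewrite !inE andbA.
Qed.

Lemma nbr_le u : #|[set z in U' | e u z]| <= k.
Proof.
apply: leq_trans (hdeg u); apply: subset_leq_card.
by apply/subsetP => y; rewrite !inE => /andP [].
Qed.

Lemma saturate (c : V -> 'I_k) u :
  (exists2 m, m != c u & cnt c u m = 0) \/
  (k.-1 + \sum_(col < k | col != c u) (cnt c u col).-1 <= #|[set z in U' | e u z]|).
Proof.
case: (boolP [exists m, (m != c u) && (cnt c u m == 0)]).
  by case/existsP => m /andP [h1 /eqP h2]; left; exists m.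
move/existsPn => hall; right.
have e1 : \sum_(col < k | col != c u) cnt c u col =
    k.-1 + \sum_(col < k | col != c u) (cnt c u col).-1.
  have -> : k.-1 = \sum_(col < k | col != c u) 1.
    by rewrite sum1_card cardC1 card_ord.
  rewrite -big_split /=; apply: eq_bigr => col hcol.
  have := hall col; rewrite hcol /= => h; rewrite add1n prednK //; lia.
rewrite -e1 -(sum_cnt c u) [X in _ <= X](bigID (fun col => col != c u)) /=.
exact: leq_addr.
Qed.

Lemma nbr_lt {u} : u \in Nb -> #|[set z in U' | e u z]| <= k.-1.
Proof.
move=> hu; have : #|[set z in U' | e u z]| < #|[set z | e u z]|.
  apply: proper_card; rewrite properE; apply/andP; split.
    by apply/subsetP => z; rewrite !inE => /andP [].
  apply/subsetPn; exists v; first by rewrite inE esym; move: hu; rewrite inE => /andP [].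
  by rewrite !inE eqxx.
by have := hdeg u; lia.
Qed.

Lemma recol_proper {c : V -> 'I_k} {u m} : u \in U' -> proper e U' c -> cnt c u m = 0 ->
  proper e U' (recol c u m).
Proof.
move=> hu hc h0; apply: (extend esym eirr) => //.
  by apply: proper_sub hc; apply: subD1set.
move=> y hy hyu; apply/negP => /eqP hm.
have : y \in [set z in U' | e u z & c z == m].
  by rewrite inE hyu hm eqxx !andbT; exact: (subsetP (subD1set U' u)) y hy.
by move: h0; rewrite /cnt => /eqP; rewrite cards_eq0 => /eqP ->; rewrite inE.
Qed.

Lemma NU' {y} : y \in Nb -> y \in U'.
Proof. by rewrite inE => /andP []. Qed.

Lemma P1 {c : V -> 'I_k} y col : proper e U' c -> y \in Nb -> col != c y -> cnt c y col = 1.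
Proof.
move=> hc hy hcol.
have ge1 : forall m, m != c y -> 0 < cnt c y m.
  move=> m hm; rewrite lt0n; apply/negP => /eqP h0.
  have hc' := recol_proper (NU' hy) hc h0.
  have [z hz hzc] := rainbow hc' (c y).
  move: hzc; rewrite /recol; case: (z =P y) => [_ hmy|nzy hzy].
    by rewrite hmy eqxx in hm.
  by apply: nzy; apply: (rain_inj hc).
case: (saturate c y) => [[m hm h0]|hs].
  by have := ge1 m hm; rewrite h0.
have := nbr_lt hy => hnb.
have hsum : \sum_(col0 < k | col0 != c y) (cnt c y col0).-1 = 0 by lia.
move: hsum; rewrite (bigD1 col) //= => h.
have := ge1 col hcol; lia.
Qed.

Definition kr (c : V -> 'I_k) (i j : 'I_k) : rel V := fun x y =>
  [&& x \in U', y \in U', e x y, (c x == i) || (c x == j) & (c y == i) || (c y == j)].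

Lemma kr_sym c i j : symmetric (kr c i j).
Proof. by move=> x y; rewrite /kr esym; do 2 case: (_ \in U'); case: (e y x); rewrite //= andbC. Qed.

Lemma kr_C c i j : kr c i j =2 kr c j i.
Proof. by move=> x y; rewrite /kr [(c x == i) || _]orbC [(c y == i) || _]orbC. Qed.

Definition sw (i j col : 'I_k) := if col == i then j else if col == j then i else col.

Lemma sw_invol i j : involutive (sw i j).
Proof.
move=> col; rewrite /sw; have [h1|n1] := eqVneq col i.
  by have [h3|n3] := eqVneq j i; rewrite ?h3 ?eqxx // (negbTE n3) h1.
have [h2|n2] := eqVneq col j; first by rewrite eqxx h2.
by rewrite (negbTE n1) (negbTE n2).
Qed.

Lemma sw_inj i j : injective (sw i j).
Proof. exact: inv_inj (sw_invol i j). Qed.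

Lemma sw_in i j col : ((sw i j col == i) || (sw i j col == j)) = ((col == i) || (col == j)).
Proof.
rewrite /sw; have [h1|n1] := eqVneq col i; first by rewrite eqxx orbT.
have [h2|n2] := eqVneq col j; first by rewrite eqxx.
by rewrite (negbTE n1) (negbTE n2).
Qed.

Lemma sw_out {i j col} : ~~ ((col == i) || (col == j)) -> sw i j col = col.
Proof. by rewrite /sw negb_or => /andP [/negbTE -> /negbTE ->]. Qed.

Lemma sw_eq_i {i j col} : i != j -> sw i j col = i -> col = j.
Proof.
move=> hij; rewrite /sw; have [h1|n1] := eqVneq col i; first by move=> h; rewrite h eqxx in hij.
have [h2|n2] := eqVneq col j => // h; by rewrite h eqxx in n1.
Qed.

Definition kswap c i j a := fun x => if connect (kr c i j) a x then sw i j (c x) else c x.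

Lemma kswap_proper {c} i j a : proper e U' c -> proper e U' (kswap c i j a).
Proof.
move=> hc.
have key : forall x y, x \in U' -> y \in U' -> e x y ->
    connect (kr c i j) a x -> ~~ connect (kr c i j) a y -> sw i j (c x) != c y.
  move=> x y hx hy hxy cx cy; apply/eqP => hs.
  case hin: ((c y == i) || (c y == j)).
    have hin' : (c x == i) || (c x == j) by rewrite -sw_in hs.
    apply: (negP cy); apply: connect_trans cx (connect1 _).
    by rewrite /kr hx hy hxy hin hin'.
  have hx' : ~~ ((c x == i) || (c x == j)) by rewrite -sw_in hs hin.
  by move: (hc x y hx hy hxy); rewrite -(sw_out hx') hs eqxx.
move=> x y hx hy hxy; rewrite /kswap.
case cx: (connect _ a x); case cy: (connect _ a y).
- by rewrite (inj_eq (sw_inj i j)); apply: hc.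
- by apply: key => //; rewrite cy.
- by rewrite eq_sym; apply: key => //; [rewrite esym|rewrite cx].
- exact: hc.
Qed.

Lemma P2 {c i j y1 y2} : proper e U' c -> i != j -> y1 \in Nb -> y2 \in Nb ->
  c y1 = i -> c y2 = j -> connect (kr c i j) y1 y2.
Proof.
move=> hc hij h1 h2 c1 c2; apply/negPn/negP => hn.
have hc' := kswap_proper i j y1 hc.
have [z hz] := rainbow hc' i.
rewrite /kswap; case cz: (connect _ y1 z) => hzi.
  have := sw_eq_i hij hzi; rewrite -c2 => /(rain_inj hc _ _ hz h2) ez.
  by rewrite -ez cz in hn.
have ez : z = y1 by apply: (rain_inj hc) => //; rewrite hzi c1.
by rewrite ez connect0 in cz.
Qed.

Definition kdeg c i j x := #|[set z | kr c i j x z]|.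

Lemma kr_sub_cnt {c} i j x : proper e U' c -> c x = i ->
  [set z | kr c i j x z] \subset [set z in U' | e x z & c z == j].
Proof.
move=> hc hx; apply/subsetP => z; rewrite in_set /kr => /and5P [h1 h2 h3 h4 h5]; rewrite in_set.
rewrite h2 h3 /=; move: h5 => /orP [/eqP hzi|//].
by have := hc x z h1 h2 h3; rewrite hx hzi eqxx.
Qed.

Lemma kdeg_le_cnt {c} i j x : proper e U' c -> c x = i -> kdeg c i j x <= cnt c x j.
Proof. by move=> hc hx; apply: subset_leq_card; apply: kr_sub_cnt. Qed.

Lemma kdegN {c i j y} : proper e U' c -> i != j -> y \in Nb -> c y = i -> kdeg c i j y <= 1.
Proof.
move=> hc hij hy hci; rewrite -(@P1 c y j hc hy); first exact: kdeg_le_cnt.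
by rewrite hci eq_sym.
Qed.

Lemma kr_in {c i j x y} : kr c i j x y -> (x \in U') && ((c x == i) || (c x == j)).
Proof. by rewrite /kr => /and5P [-> _ _ -> _]. Qed.

Lemma kr_in2 {c i j x y} : kr c i j x y -> (y \in U') && ((c y == i) || (c y == j)).
Proof. by rewrite /kr => /and5P [_ -> _ _ ->]. Qed.

Lemma cut {c i j y1 y2 p t m} : proper e U' c -> i != j -> y1 \in Nb -> y2 \in Nb ->
  c y1 = i -> c y2 = j ->
  path (kr c i j) y1 p -> uniq (y1 :: p) -> last y1 p = y2 -> 0 < t -> t < size p ->
  (forall r, 0 < r -> r < t -> kdeg c i j (nth y1 (y1 :: p) r) <= 2) ->
  m != i -> m != j -> proper e U' (recol c (nth y1 (y1 :: p) t) m) -> False.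
Proof.
move=> hc hij h1 h2 c1 c2 hp hu hl ht0 ht hdeg2 hmi hmj hc'.
set s := y1 :: p; set u := nth y1 s t.
have hsz : size s = (size p).+1 by [].
have ey2 : y2 = nth y1 s (size p) by rewrite -hl (last_nth y1).
have u1 : y1 != u.
  by rewrite [X in X != _](_ : y1 = nth y1 s 0) // nth_uniq // ?hsz; lia.
have u2 : y2 != u by rewrite ey2 nth_uniq // ?hsz; lia.
have c1' : recol c u m y1 = i by rewrite /recol (negbTE u1).
have c2' : recol c u m y2 = j by rewrite /recol (negbTE u2).
have hconn := P2 hc' hij h1 h2 c1' c2'.
pose Q := fun x => (x \in s) && (index x s < t).
have Qy2 : ~~ Q y2.
  rewrite /Q negb_and; apply/orP; right; rewrite -leqNgt ey2 index_uniq ?hsz //.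
  exact: ltnW.
have Qy1 : Q y1.
  by rewrite /Q mem_head (_ : index y1 s = 0) // /s /= eqxx.
apply: (negP Qy2); apply: (conn_closed _ Qy1 hconn).
move=> a b /andP [ha hia] hab.
set r := index a s in hia.
have ea : a = nth y1 s r by rewrite nth_index.
have hrs : r < size s by rewrite index_mem.
have hau : a != u.
  rewrite ea nth_uniq //; first by rewrite neq_ltn hia.
  by rewrite hsz ltnS ltnW.
have hbu : b != u.
  apply/eqP => ebu; move: hab; rewrite /kr ebu /recol eqxx => /and5P [_ _ _ _].
  by rewrite (negbTE hmi) (negbTE hmj).
have hab' : kr c i j a b.
  by move: hab; rewrite /kr /recol (negbTE hau) (negbTE hbu).
have hrp : r <= size p by rewrite -ltnS -hsz index_mem.
have hcard : #|[set y | kr c i j (nth y1 s r) y]| <= (0 < r) + (r < size p).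
  case hr0: (0 < r).
    have := hdeg2 r hr0 hia; rewrite /kdeg => h; apply: (leq_trans h).
    by have -> : r < size p by apply: ltn_trans hia ht.
  have -> : r = 0 by move/negbT: hr0; rewrite lt0n negbK => /eqP.
  have -> : 0 < size p by apply: leq_trans ht0 (ltnW ht).
  by apply: kdegN hc hij h1 c1.
rewrite ea in hab'.
case: (path_nbr (kr_sym c i j) hp hu hrp hcard hab') => [[hr eb]|[hr eb]].
  have hrt : r.+1 != t.
    by apply: contra hbu => /eqP ert; rewrite eb ert.
  have hr1 : r.+1 < size s by rewrite hsz ltnS.
  by rewrite /Q eb mem_nth // index_uniq // ltn_neqAle hrt hia.
have hr1 : r.-1 < size s by apply: leq_ltn_trans (leq_pred r) hrs.
by rewrite /Q eb mem_nth // index_uniq // (leq_ltn_trans (leq_pred r) hia).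
Qed.

Lemma kdeg_C c i j x : kdeg c i j x = kdeg c j i x.
Proof. by rewrite /kdeg; apply: eq_card => z; rewrite !inE kr_C. Qed.

Lemma other_col {c i j u} : proper e U' c -> i != j -> u \in U' -> (c u == i) || (c u == j) ->
  exists o, [/\ o != c u, (forall m, m != c u -> m != o -> (m != i) && (m != j))
               & kdeg c i j u <= cnt c u o].
Proof.
move=> hc hij hu /orP [/eqP hci|/eqP hcj].
  exists j; split; first by rewrite hci eq_sym.
    by move=> m; rewrite hci => -> ->.
  exact: kdeg_le_cnt.
exists i; split; first by rewrite hcj.
  by move=> m; rewrite hcj => -> ->.
rewrite kdeg_C; exact: kdeg_le_cnt.
Qed.

Lemma big_term (F : 'I_k -> nat) (P : pred 'I_k) o : P o -> F o <= \sum_(col < k | P col) F col.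
Proof. by move=> ho; rewrite (bigD1 o) //= leq_addr. Qed.

Lemma interior {c i j y1 y2 p} : proper e U' c -> i != j -> y1 \in Nb -> y2 \in Nb ->
  c y1 = i -> c y2 = j ->
  path (kr c i j) y1 p -> uniq (y1 :: p) -> last y1 p = y2 ->
  forall r, 0 < r -> r < size p -> kdeg c i j (nth y1 (y1 :: p) r) <= 2.
Proof.
move=> hc hij h1 h2 c1 c2 hp hu hl.
elim/ltn_ind => r IH hr0 hr.
rewrite leqNgt; apply/negP => h3.
have hadj : kr c i j (nth y1 (y1 :: p) r.-1) (nth y1 (y1 :: p) r).
  have := @path_adj _ _ _ _ r.-1 hp; rewrite prednK //; apply.
  exact: ltnW hr.
have [u eu] : exists u, u = nth y1 (y1 :: p) r by eexists.
rewrite -eu in hadj h3.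
have /andP [huU hucol] := kr_in2 hadj.
have [o [hou hmo hko]] := other_col hc hij huU hucol.
case: (saturate c u) => [[m hm h0]|hs].
  have hmo' : m != o.
    apply/eqP => emo; move: h3 hko; rewrite -emo h0; case: (kdeg c i j u) => //.
  have /andP [hmi hmj] := hmo m hm hmo'.
  apply: (cut hc hij h1 h2 c1 c2 hp hu hl hr0 hr _ hmi hmj); last by rewrite -eu; exact: recol_proper huU hc h0.
  move=> r' hr'0 hr'r; apply: IH => //; exact: ltn_trans hr'r hr.
have := leq_trans hs (nbr_le u).
have := big_term (fun col => (cnt c u col).-1) (fun col => col != c u) o hou.
move: h3 hko hk3; move: (cnt c u o) (kdeg c i j u) => a b; move: (\sum_(_ < _ | _) _) => S.
clear -hk3; move=> h3 hko _ hbig hsS.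
have : k.-1 + 2 <= k.
  apply: leq_trans hsS; rewrite leq_add2l; apply: leq_trans hbig.
  by rewrite -ltnS prednK ?(leq_trans _ hko) // (leq_trans _ h3).
by case: k hk3 => // k' _; rewrite /= addn2 ltnn.
Qed.

Lemma conn_col {c i j a x} : connect (kr c i j) a x ->
  x = a \/ ((x \in U') && ((c x == i) || (c x == j))).
Proof.
move=> hx.
pose Q := fun z => (z == a) || ((z \in U') && ((c z == i) || (c z == j))).
have hQ : forall b d, Q b -> kr c i j b d -> Q d.
  by move=> b d _ hbd; rewrite /Q (kr_in2 hbd) orbT.
have Qa : Q a by rewrite /Q eqxx.
have := @conn_closed _ (kr c i j) Q a x hQ Qa hx.
by rewrite /Q => /orP [/eqP ->|->]; [left|right].
Qed.

Lemma p_nonnil {c : V -> 'I_k} {i j : 'I_k} {y1 y2 : V} {p : seq V} : i != j -> c y1 = i -> c y2 = j -> last y1 p = y2 -> 0 < size p.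
Proof.
move=> hij c1 c2; case: p => [/= e12|//].
by move: hij; rewrite -c1 -c2 e12 eqxx.
Qed.

Lemma comp_in {c i j y1 y2 p} : proper e U' c -> i != j -> y1 \in Nb -> y2 \in Nb ->
  c y1 = i -> c y2 = j ->
  path (kr c i j) y1 p -> uniq (y1 :: p) -> last y1 p = y2 ->
  forall x, connect (kr c i j) y1 x -> x \in y1 :: p.
Proof.
move=> hc hij h1 h2 c1 c2 hp hu hl x hx.
have hsp := p_nonnil hij c1 c2 hl.
apply: (conn_closed _ (mem_head y1 p) hx) => a b ha hab.
have [r [er hrp]] : exists r, a = nth y1 (y1 :: p) r /\ r <= size p.
  by exists (index a (y1 :: p)); rewrite nth_index // -ltnS index_mem.
rewrite er in hab.
have hcard : #|[set y | kr c i j (nth y1 (y1 :: p) r) y]| <= (0 < r) + (r < size p).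
  case hr0: (0 < r); last first.
    have -> : r = 0 by move/negbT: hr0; rewrite lt0n negbK => /eqP.
    by rewrite hsp /=; apply: kdegN hc hij h1 c1.
  case hr1: (r < size p).
    by apply: interior hc hij h1 h2 c1 c2 hp hu hl r hr0 hr1.
  have -> : r = size p by apply/eqP; rewrite eqn_leq hrp leqNgt hr1.
  rewrite -(last_nth y1) hl /=; rewrite -/(kdeg c i j y2) kdeg_C.
  by apply: kdegN hc _ h2 c2; rewrite eq_sym.
case: (path_nbr (kr_sym c i j) hp hu hrp hcard hab) => [[hr ->]|[hr ->]].
  have h : r.+1 < size (y1 :: p) by rewrite /= ltnS.
  exact: (mem_nth y1 h).
have h : r.-1 < size (y1 :: p) by rewrite /= ltnS (leq_trans (leq_pred r) hrp).
exact: (mem_nth y1 h).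
Qed.

Lemma big_two (F : 'I_k -> nat) (P : pred 'I_k) a b : P a -> P b -> a != b ->
  F a + F b <= \sum_(col < k | P col) F col.
Proof.
move=> ha hb hab; rewrite (bigD1 a) //= leq_add2l (bigD1 b) /=; last by rewrite hb eq_sym hab.
exact: leq_addr.
Qed.

Lemma cnt2 {c i j y1 y2 p u} : proper e U' c -> i != j -> y1 \in Nb -> y2 \in Nb ->
  c y1 = i -> c y2 = j ->
  path (kr c i j) y1 p -> uniq (y1 :: p) -> last y1 p = y2 ->
  connect (kr c i j) y1 u -> u != y1 -> c u = i ->
  exists2 r, (0 < r < size p) & (u = nth y1 (y1 :: p) r /\ 1 < cnt c u j).
Proof.
move=> hc hij h1 h2 c1 c2 hp hu hl hcon hne hcu.
have hin := comp_in hc hij h1 h2 c1 c2 hp hu hl u hcon.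
set r := index u (y1 :: p).
have eu : u = nth y1 (y1 :: p) r by rewrite nth_index.
have hrp : r <= size p by rewrite -ltnS index_mem.
have hr0 : 0 < r.
  by rewrite lt0n; apply: contra hne => /eqP hr; rewrite eu hr.
have hr1 : r < size p.
  rewrite ltn_neqAle hrp andbT; apply/negP => /eqP hr.
  have eu2 : u = y2 by rewrite eu hr -(last_nth y1) hl.
  by move: hij; rewrite -hcu eu2 c2 eqxx.
exists r; first by rewrite hr0 hr1.
split=> //.
have [a1 a2 a3] := path_two (kr_sym c i j) hp hu hr0 hr1.
rewrite -eu in a1 a2.
have hs := kr_sub_cnt i j u hc hcu.
have b1 : nth y1 (y1 :: p) r.+1 \in [set z | kr c i j u z] by rewrite inE.
have b2 : nth y1 (y1 :: p) r.-1 \in [set z | kr c i j u z] by rewrite inE.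
rewrite /cnt; exact: (card2_ge (subsetP hs _ b1) (subsetP hs _ b2) a3).
Qed.

Lemma Lp {c i j l yi yj yl u} : proper e U' c -> i != j -> i != l -> j != l ->
  yi \in Nb -> yj \in Nb -> yl \in Nb -> c yi = i -> c yj = j -> c yl = l ->
  connect (kr c i j) yi u -> connect (kr c i l) yi u -> u = yi.
Proof.
move=> hc hij hil hjl hi hj hl ci cj cl cu1 cu2.
apply/eqP; apply/negPn/negP => hne.
have [p [hp hlast hu]] := upath (P2 hc hij hi hj ci cj).
have [p' [hp' hlast' hu']] := upath (P2 hc hil hi hl ci cl).
have hcu : c u = i.
  case: (conn_col cu1) => [eu|/andP [huU /orP [/eqP //|/eqP hcj]]].
    by rewrite eu eqxx in hne.
  case: (conn_col cu2) => [eu|/andP [_ /orP [/eqP hci|/eqP hcl]]].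
  - by rewrite eu eqxx in hne.
  - by rewrite hci.
  - by move: hjl; rewrite -hcj hcl eqxx.
have huU : u \in U'.
  by case: (conn_col cu1) => [eu|/andP [//]]; rewrite eu eqxx in hne.
have [r hr [eu hcj]] := cnt2 hc hij hi hj ci cj hp hu hlast cu1 hne hcu.
have [r' hr' [eu' hcl]] := cnt2 hc hil hi hl ci cl hp' hu' hlast' cu2 hne hcu.
case: (saturate c u) => [[m hm h0]|hs].
  have hmj : m != j by apply/eqP => emj; move: hcj; rewrite -emj h0.
  have hml : m != l by apply/eqP => eml; move: hcl; rewrite -eml h0.
  have hmi : m != i by rewrite -hcu.
  case/andP: hr => hr0 hr1.
  apply: (cut hc hij hi hj ci cj hp hu hlast hr0 hr1 _ hmi hmj); last first.
    by rewrite -eu; exact: recol_proper huU hc h0.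
  move=> r1 h1 h2; apply: (interior hc hij hi hj ci cj hp hu hlast) => //.
  exact: ltn_trans h2 hr1.
have := leq_trans hs (nbr_le u).
have := big_two (fun col => (cnt c u col).-1) (fun col => col != c u) j l.
rewrite hcu eq_sym hij eq_sym hil hjl => /(_ isT isT isT).
move: hcj hcl hk3; move: (cnt c u j) (cnt c u l) => a b; move: (\sum_(_ < _ | _) _) => S.
clear; move=> ha hb hk hab hS; lia.
Qed.

Lemma stuck_false (c : V -> 'I_k) : proper e U' c -> False.
Proof.
move=> hc.
have [a [b [ha hb hab heab]]] : exists a b, [/\ a \in Nb, b \in Nb, a != b & ~~ e a b].
  case: (boolP [exists a in Nb, exists b in Nb, (a != b) && ~~ e a b]).
    by case/exists_inP => a ha /exists_inP [b hb /andP [h1 h2]]; exists a, b.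
  move/exists_inPn => hall; exfalso; apply: hcliq; exists (v |: Nb); split.
    have hvN : v \notin Nb by rewrite inE inU' eqxx.
    by rewrite cardsU1 hvN (cardN hc).
  have hNN : forall x y, x \in Nb -> y \in Nb -> x != y -> e x y.
    move=> x y hx hy hxy; have := hall x hx; rewrite negb_exists_in => /forall_inP /(_ y hy).
    by rewrite negb_and hxy negbK.
  have hvx : forall x, x \in Nb -> e v x by move=> x; rewrite inE => /andP [].
  move=> x y; rewrite !in_setU1 => /orP [/eqP ->|hx] /orP [/eqP ->|hy]; rewrite ?eqxx //.
  - by move=> _; apply: hvx.
  - by move=> _; rewrite esym; apply: hvx.
  - exact: hNN.
set i := c a; set j := c b.
have hij : i != j by apply: contra hab => /eqP hcab; apply/eqP; apply: (rain_inj hc).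
have [w hw] : exists w, [set z in U' | e a z & c z == j] = [set w].
  by apply/cards1P; rewrite -/(cnt c a j) (@P1 c a j hc ha) // eq_sym.
have hwin : w \in [set z in U' | e a z & c z == j] by rewrite hw set11.
move: hwin; rewrite inE => /andP [hwU /andP [haw /eqP hcw]].
have hwb : w != b by apply: contraNneq heab => <-.
have hwa : w != a by apply: contraTneq haw => ->; rewrite eirr.
have [l hl] : exists l, l \notin [set i; j].
  have : ~~ ([set: 'I_k] \subset [set i; j]).
    apply/negP => /subset_leq_card; rewrite cardsT card_ord cards2 hij => h.
    by have := leq_trans hk3 h.
  by case/subsetPn => l _ hl; exists l.
move: hl; rewrite !inE negb_or => /andP [hli hlj].
have [yl hyl cyl] := rainbow hc l.
pose c' := kswap c i l a.
have hc' : proper e U' c' := kswap_proper i l a hc.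
have hail : connect (kr c i l) a yl by apply: P2 hc _ ha hyl _ cyl; rewrite // eq_sym.
have c'a : c' a = l by rewrite /c' /kswap connect0 /sw eqxx.
have c'yl : c' yl = i by rewrite /c' /kswap hail cyl /sw (negbTE hli) eqxx.
have notK : forall x, x != a -> c x != i -> c x != l -> ~~ connect (kr c i l) a x.
  move=> x hxa hxi hxl; apply/negP => /conn_col [exa|/andP [_ /orP [/eqP h|/eqP h]]].
  - by rewrite exa eqxx in hxa.
  - by rewrite h eqxx in hxi.
  - by rewrite h eqxx in hxl.
have c'x : forall x, ~~ connect (kr c i l) a x -> c' x = c x.
  by move=> x hx; rewrite /c' /kswap (negbTE hx).
have c'b : c' b = j.
  by rewrite c'x //; apply: notK; rewrite ?(eq_sym b) // -/j ?(eq_sym j) // eq_sym.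
have c'w : c' w = j.
  by rewrite c'x //; apply: notK; rewrite // hcw ?(eq_sym j) // eq_sym.
have hjl : j != l by rewrite eq_sym.
have hji : j != i by rewrite eq_sym.
have hli' : l != i by [].
have conn1 : connect (kr c' j l) b w.
  apply: connect_trans (P2 hc' hjl hb ha c'b c'a) (connect1 _).
  by rewrite /kr (NU' ha) hwU haw c'a c'w !eqxx !orbT.
have conn2 : connect (kr c' j i) b w.
  have [p [hp hlast hu]] := upath (P2 hc hij ha hb (erefl i) (erefl j)).
  case: p hp hlast hu => [/= _ eab|h p2]; first by rewrite eab eqxx in hab.
  rewrite /= => /andP [hah hp2] hlast hu.
  have ehw : h = w.
    apply/set1P; rewrite -hw; apply: (subsetP (kr_sub_cnt i j a hc (erefl i))).
    by rewrite inE.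
  subst h.
  have hall : all (fun x => ~~ connect (kr c i l) a x) (w :: p2).
    apply/allP => x hx; apply/negP => hK.
    have hxa : x != a by apply: contraTneq hx => ->; move: hu; rewrite /= => /andP [].
    have hconx : connect (kr c i j) a x.
      by apply: (path_connect (p := w :: p2)); rewrite /= ?hah ?hp2 // inE hx orbT.
    have hil : i != l by rewrite eq_sym.
    by move: hxa; rewrite (Lp hc hij hil hjl ha hb hyl (erefl i) (erefl j) cyl hconx hK) eqxx.
  have hp2' : path (kr c' i j) w p2.
    apply: (sub_in_path _ hall hp2) => x y hx hy.
    by rewrite /kr !c'x.
  rewrite (eq_connect (kr_C c' j i)) (sym_connect_sym (kr_sym c' i j)).
  by apply/connectP; exists p2.
have := Lp hc' hjl hji hli' hb ha hyl c'b c'a c'yl conn1 conn2.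
by move/eqP; rewrite (negbTE hwb).
Qed.

End Stuck.

Theorem brooks : forall U : {set V}, exists c : V -> 'I_k, proper e U c.
Proof.
have hk0 : 0 < k by apply: leq_trans hk3.
move=> U; move: {2}#|U| (leqnn #|U|) => n; elim: n U => [|n IH] U hU.
  exists (fun _ => Ordinal hk0) => x y hx; move: hU.
  by rewrite leqn0 cards_eq0 => /eqP hU; rewrite hU inE in hx.
case: (set_0Vmem U) => [->|[v hv]].
  by exists (fun _ => Ordinal hk0) => x y; rewrite inE.
have [c0 hc0] : exists c : V -> 'I_k, proper e (U :\ v) c.
  by apply: IH; move: hU; rewrite (cardsD1 v U) hv /= add1n ltnS.
case: (Classical_Prop.classic (exists c : V -> 'I_k, proper e U c)) => // hn.
exfalso.
have hnone : forall c : V -> 'I_k, ~ proper e U c by move=> c hc; apply: hn; exists c.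
exact: (@stuck_false U v hv hnone c0 hc0).
Qed.

End Brooks.

Import GRing.Theory.
Local Open Scope ring_scope.

Lemma F2_cases (s : 'F_2) : s = 0 \/ s = 1.
Proof. by case: s => [[|[|m]] hm] //=; [left|right]; apply/val_inj. Qed.

Lemma contrast_shift n (T : {set 'I_n}) (x r : 'rV['F_2]_n) :
  \sum_(j in T) r 0 j = 1 -> contrast T (x + r) = - contrast T x.
Proof.
move=> hr; rewrite /contrast.
have -> : \sum_(j in T) (x + r) 0 j = \sum_(j in T) x 0 j + 1.
  by rewrite -hr -big_split /=; apply: eq_bigr => j _; rewrite mxE.
by case: (F2_cases (\sum_(j in T) x 0 j)) => ->.
Qed.

Lemma estimable_of q n (X : 'M['F_2]_(q, n)) (T : {set 'I_n}) (r : 'rV['F_2]_n) :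
  (r <= X)%MS -> \sum_(j in T) r 0 j = 1 -> estimable X T.
Proof.
move=> rX hr a.
set S := \sum_(x | _) _.
have HS : S = - S.
  rewrite {1}/S (reindex_inj (addIr r)) /= /S -sumrN; apply: eq_big => x.
    rewrite /in_block.
    have -> : x + r - a = (x - a) + r by rewrite addrAC.
    apply/idP/idP => h; last exact: addmx_sub h rX.
    have -> : x - a = (x - a + r) + (-1) *: r by rewrite scaleN1r addrK.
    by apply: (addmx_sub h (scalemx_sub _ rX)).
  by move=> _; rewrite contrast_shift.
move: HS; lia.
Qed.

Definition good_col {n q} (E : rel 'I_n) (col : 'I_n -> 'rV['F_2]_q) :=
  (forall i, col i != 0) /\ (forall i j, E i j -> col i != col j).

Definition Ymx {n q} (col : 'I_n -> 'rV['F_2]_q) : 'M['F_2]_(n, q) :=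
  \matrix_i col i.

Lemma rowK' {n q} (col : 'I_n -> 'rV['F_2]_q) i : row i (Ymx col) = col i.
Proof. exact: rowK. Qed.

Lemma rank_step n q (E : rel 'I_n) (col : 'I_n -> 'rV['F_2]_q) :
  (q <= n)%N -> good_col E col -> (\rank (Ymx col) < q)%N ->
  exists col' : 'I_n -> 'rV['F_2]_q, good_col E col' /\
    (\rank (Ymx col) < \rank (Ymx col'))%N.
Proof.
move=> hqn [hnz hpr] hr.
set Y := Ymx col.
have hrn : (\rank Y < n)%N by apply: leq_trans hqn.
have : kermx Y != 0.
  by rewrite -mxrank_eq0 mxrank_ker -lt0n subn_gt0.
case/matrix0Pn => r0 [i0 hu].
set u := row r0 (kermx Y).
have uY : u *m Y = 0 by rewrite /u -row_mul mulmx_ker row0.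
have ui0 : u 0 i0 = 1.
  have : u 0 i0 != 0 by rewrite /u mxE.
  by case: (u 0 i0) => [[|[|m]] hm] //= _; apply/val_inj.
clearbody u.
have : ~~ (1%:M <= Y)%MS by rewrite sub1mx /row_full neq_ltn hr.
case/row_subPn => c0 hv.
pose v := row c0 (1%:M : 'M['F_2]_q).
have {}hv : ~~ (v <= Y)%MS := hv.
pose col' := fun i => if i == i0 then v else col i.
have vnz : v != 0 by apply: contra hv => /eqP h; rewrite h sub0mx.
have colY : forall i, (col i <= Y)%MS by move=> i; rewrite -(rowK' col i) row_sub.
exists col'; split.
  split=> [i|i j hij]; rewrite /col'.
    by case: (i == i0).
  case: (i =P i0) => [ei|_]; case: (j =P i0) => [ej|_].
  - by have := hpr i j hij; rewrite ei ej eqxx.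
  - by apply: contra hv => /eqP ->; exact: colY.
  - by apply: contra hv => /eqP <-; exact: colY.
  - exact: hpr.
set Y' := Ymx col'.
have vY' : (v <= Y')%MS.
  have e0 : col' i0 = v by rewrite /col' eqxx.
  by rewrite -e0 -(rowK' col' i0) row_sub.
apply: rank_ltmx; rewrite ltmxE; apply/andP; split; last first.
  by apply: contra hv => h; apply: submx_trans vY' h.
apply/row_subP => i; rewrite rowK'.
case: (i =P i0) => [->|ne].
  pose w := delta_mx 0 i0 - u.
  have hw : w 0 i0 = 0 by rewrite /w !mxE ui0 !eqxx subrr.
  have e1 : col i0 = w *m Y by rewrite mulmxBl uY subr0 -rowE rowK'.
  clearbody w.
  have -> : col i0 = w *m Y'.
    rewrite e1; apply/rowP => c; rewrite !mxE; apply: eq_bigr => j _.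
    rewrite /Y /Y' /Ymx !mxE /col'; case: (j =P i0) => [->|_]; last by [].
    by rewrite hw !mul0r.
  exact: submxMl.
have -> : col i = col' i by rewrite /col'; case: (i =P i0).
by rewrite -(rowK' col' i) row_sub.
Qed.

Lemma rank_fix n q (E : rel 'I_n) (col : 'I_n -> 'rV['F_2]_q) :
  (q <= n)%N -> good_col E col ->
  exists col' : 'I_n -> 'rV['F_2]_q, good_col E col' /\ \rank (Ymx col') = q.
Proof.
move=> hqn.
move: {2}(q - \rank (Ymx col))%N (leqnn (q - \rank (Ymx col))%N) => d.
elim: d col => [|d IH] col hd hg.
  exists col; split=> //; apply/eqP; rewrite eqn_leq rank_leq_col /=.
  by rewrite -subn_eq0 -leqn0.
have [hr|hr] := ltnP (\rank (Ymx col)) q.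
  have [col' [hg' hlt]] := @rank_step n q E col hqn hg hr.
  apply: (IH col') => //.
  move: hd hlt; set a := \rank (Ymx col); set b := \rank (Ymx col'); lia.
exists col; split=> //; apply/eqP; rewrite eqn_leq rank_leq_col /=; exact: hr.
Qed.

Lemma F2_neq1 (a b : 'F_2) : a != b -> a + b = 1.
Proof. case: (F2_cases a) => ->; case: (F2_cases b) => ->. all: try by rewrite eqxx.
all: move=> _; apply/val_inj => //=. Qed.

Lemma F2_nz1 (a : 'F_2) : a != 0 -> a = 1.
Proof. by case: (F2_cases a) => ->; rewrite ?eqxx. Qed.

Lemma conclude n q (S : {set {set 'I_n}}) (hS : two_factor_interactions S)
  (col : 'I_n -> 'rV['F_2]_q) :
  good_col (fun i j => (i != j) && ([set i; j] \in S)) col -> \rank (Ymx col) = q ->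
  exists X : 'M['F_2]_(q, n),
    \rank X = q /\
    (forall i : 'I_n, estimable X [set i]) /\
    (forall s, s \in S -> estimable X s).
Proof.
move=> [hnz hpr] hr.
exists (Ymx col)^T; split; first by rewrite mxrank_tr.
have entry : forall c i, (row c (Ymx col)^T) 0 i = col i 0 c.
  by move=> c i; rewrite !mxE.
split.
  move=> i; have /matrix0Pn [i' [c hc]] := hnz i.
  apply: (@estimable_of _ _ _ _ (row c (Ymx col)^T)); first exact: row_sub.
  by rewrite big_set1 entry; rewrite (ord1 i') in hc; apply: F2_nz1.
move=> s hs; have /cards2P [i [j [hij es]]] : #|s| == 2%N by rewrite (hS s hs).
subst s.
have hcol : col i != col j by apply: hpr; rewrite hij hs.
have [c hc] : exists c, col i 0 c != col j 0 c.
  apply/existsP; apply: contraR hcol => /existsPn h.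
  by apply/eqP/rowP => c; apply/eqP; have := h c; rewrite negbK.
apply: (@estimable_of _ _ _ _ (row c (Ymx col)^T)); first exact: row_sub.
rewrite big_setU1 /=; last by rewrite in_set1.
by rewrite big_set1 !entry; apply: F2_neq1.
Qed.


Lemma colour_to_vec n q (E : rel 'I_n) (f : 'I_n -> 'I_(2 ^ q - 1)) :
  (forall i j, E i j -> f i != f j) ->
  exists col : 'I_n -> 'rV['F_2]_q, good_col E col.
Proof.
move=> hf.
pose A := [set~ (0 : 'rV['F_2]_q)].
have cA : (2 ^ q - 1)%N = #|A|.
  by rewrite cardsC1 card_mx card_ord mul1n subn1.
pose g := fun x : 'I_(2 ^ q - 1) => enum_val (cast_ord cA x).
exists (fun i => g (f i)); split.
  move=> i; have := enum_valP (cast_ord cA (f i)).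
  by rewrite /g !inE.
move=> i j hij; apply: contra (hf i j hij) => /eqP h.
by apply/eqP; apply: (cast_ord_inj (eq_n := cA)); apply: enum_val_inj.
Qed.

Local Close Scope ring_scope.

Lemma fdeg_eq n (S : {set {set 'I_n}}) (hS : two_factor_interactions S) i :
  fdeg S i = #|[set j | (i != j) && ([set i; j] \in S)]|.
Proof.
rewrite /fdeg.
set A := [set j | (i != j) && ([set i; j] \in S)].
have -> : [set s in S | i \in s] = [set [set i; j] | j in A].
  apply/setP => s; rewrite inE; apply/andP/imsetP.
    move=> [hs his]; have /cards2P [x [y [hxy es]]] : #|s| == 2 by rewrite (hS s hs).
    subst s; move: his; rewrite !inE => /orP [/eqP ex|/eqP ey]; subst i.
      by exists y; rewrite // inE hxy.
    exists x; last by rewrite setUC.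
    by rewrite inE eq_sym hxy /= setUC.
  move=> [j]; rewrite inE => /andP [_ hj] ->; split=> //.
  by rewrite !inE eqxx.
rewrite card_in_imset // => j j' hj hj' ej.
have : j \in [set i; j'] by rewrite -ej !inE eqxx orbT.
rewrite !inE => /orP [/eqP eji|/eqP //].
by move: hj; rewrite inE eji eqxx.
Qed.

Theorem theorem3 (n q : nat) (hq : (1 <= q)%N) (hqn : (q <= n)%N)
  (S : {set {set 'I_n}}) (hS : two_factor_interactions S) :
  ( ((forall i : 'I_n, (fdeg S i <= 2 ^ q - 1)%N) /\
     ~ (exists T : {set 'I_n}, #|T| = (2 ^ q)%N /\
          (forall i j : 'I_n, i \in T -> j \in T -> i != j -> [set i; j] \in S)))
    \/ (#|[set i : 'I_n | (2 ^ q - 1 <= fdeg S i)%N]| <= 2 ^ q - 1)%N ) ->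
  exists X : 'M['F_2]_(q, n),
    \rank X = q /\
    (forall i : 'I_n, estimable X [set i]) /\
    (forall s, s \in S -> estimable X s).
Proof.
move=> hyp.
pose E := fun i j : 'I_n => (i != j) && ([set i; j] \in S).
have esym : symmetric E by move=> i j; rewrite /E eq_sym setUC.
have eirr : irreflexive E by move=> i; rewrite /E eqxx.
have hk0 : (0 < 2 ^ q - 1)%N.
  by rewrite subn_gt0 -{1}(expn0 2) ltn_exp2l.
have hdg : forall i, fdeg S i = #|[set j | E i j]| by move=> i; exact: fdeg_eq.
have [c hc] : exists c : 'I_n -> 'I_(2 ^ q - 1), proper E [set: 'I_n] c.
  case: hyp => [[hdeg hcl]|hfew].
    case: (ltnP 1 q) => hq2.
      apply: (@brooks _ E esym eirr).
      - by move=> x; rewrite -hdg.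
      - have : (2 ^ 2 <= 2 ^ q)%N by rewrite leq_exp2l.
        by rewrite expnS expn1; lia.
      - move=> [T [hT hTe]]; apply: hcl; exists T; split.
          by rewrite hT subn1 prednK // expn_gt0.
        by move=> i j hi hj hij; have := hTe i j hi hj hij; rewrite /E hij.
    exists (fun _ => Ordinal hk0) => x y _ _ hxy; exfalso; apply: hcl.
    have eq1 : q = 1%N by apply/eqP; rewrite eqn_leq hq2 hq.
    exists [set x; y]; split.
      by rewrite cards2; move: hxy; rewrite /E eq1 => /andP [-> _].
    move=> i j; rewrite !inE => /orP [] /eqP -> /orP [] /eqP ->; rewrite ?eqxx //.
      by move: hxy => /andP [].
    by rewrite setUC; move: hxy => /andP [].
  apply: (@few_high _ E esym eirr _ hk0).
  by apply: leq_trans _ hfew; apply: subset_leq_card; apply/subsetP => x; rewrite !inE hdg.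
have [col hcol] := @colour_to_vec n q E c (fun i j hij => hc i j (in_setT i) (in_setT j) hij).
have [col' [hg hr]] := @rank_fix n q E col hqn hcol.
exact: (@conclude n q S hS col' hg hr).
Qed.
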